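(* Let $G$ be a finite group and $\gamma$ a faithful $n$-dimensional complex representation of $G$ whose character $\chi_\gamma$ is real-valued. Let $c\in G$ be such that $\chi_\gamma(c)$ is an integer, and let $m$ be the number of conjugacy classes of $G$ on which $\chi_\gamma$ takes the value $\chi_\gamma(c)$. Then $K(\gamma)$ contains a subgroup isomorphic to $\bigl(\mathbb{Z}/(n-\chi_\gamma(c))\mathbb{Z}\bigr)^{m-1}$.
   Context: Let $G$ be a finite group with irreducible complex characters $\chi_0,\chi_1,\dots,\chi_\ell$, where $\chi_0$ is the trivial character (so $\ell+1$ is the number of conjugacy classes of $G$). For a faithful $n$-dimensional complex representation $\gamma$ of $G$ with character $\chi_\gamma$, let $M=(m_{ij})\in\mathbb{Z}^{(\ell+1)\times(\ell+1)}$ be defined by $\chi_\gamma\cdot\chi_i=\sum_{j=0}^{\ell}m_{ij}\chi_j$. The extended McKay–Cartan matrix is $\tilde C:=nI-M$, and the McKay–Cartan matrix $C$ is the $\ell\times\ell$ matrix obtained from $\tilde C$ by deleting the row and column indexed by $\chi_0$. The critical group of $\gamma$ is the finite abelian group $K(\gamma):=\operatorname{coker}(C^t:\mathbb{Z}^\ell\to\mathbb{Z}^\ell)$; equivalently $\operatorname{coker}(\tilde C^t:\mathbb{Z}^{\ell+1}\to\mathbb{Z}^{\ell+1})\cong\mathbb{Z}\oplus K(\gamma)$. *)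

(* Defs.v *)
From HB Require Import structures.
From mathcomp Require Import all_boot all_order all_algebra all_fingroup all_solvable all_field all_character.
Set Implicit Arguments. Unset Strict Implicit. Unset Printing Implicit Defensive.
Import Order.TTheory GRing.Theory Num.Theory.
Local Open Scope ring_scope.

Section McKay.
Variables (gT : finGroupType) (G : {group gT}) (n : nat).
Variable rG : mx_representation algC G n.

(* m_ij : chi_gamma * chi_i = sum_j m_ij chi_j, i.e. m_ij = '[chi_gamma * chi_i, chi_j]
   (a nonnegative integer; floor is its integer value). *)
Definition mckay_coef (i j : Iirr G) : int :=
  Num.floor '[cfRepr rG * 'chi_i, 'chi_j].

Definition ext_mckay_cartan : 'M[int]_(Nirr G) :=
  \matrix_(i, j) ((n%:Z *+ (i == j)) - mckay_coef i j).

(* McKay-Cartan matrix: delete row and column of chi_0; index k : 'I_l corresponds to chi_(k+1) *)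
Definition mckay_cartan : 'M[int]_(pred_Nirr G) :=
  \matrix_(i, j) ext_mckay_cartan (lift 0 i) (lift 0 j).
End McKay.

(* For an integer matrix C : 'M_l, coker(C^t : Z^l -> Z^l) = Z^l / { C^t x }.
   Writing vectors as rows, C^t x corresponds to the row x *m C.
   [coker_has_subgroup_Zk_pow C k r] says that coker(C^t) contains a subgroup
   isomorphic to (Z/kZ)^r, i.e. there is an injective group homomorphism
   (Z/kZ)^r -> coker(C^t), given by the images [f i] of the standard generators:
   well-definedness: k * f i lies in the image of C^t;
   injectivity: sum_i a_i [f i] = 0 in the cokernel forces k | a_i for all i. *)
Definition coker_has_subgroup_Zk_pow (l : nat) (C : 'M[int]_l) (k : int) (r : nat) : Prop :=
  exists f : 'I_r -> 'rV[int]_l,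
    (forall i, exists x : 'rV[int]_l, x *m C = k *: f i) /\
    (forall a : 'I_r -> int,
        (exists x : 'rV[int]_l, x *m C = \sum_(i < r) a i *: f i) ->
        forall i, (k %| a i)%Z).

(* Main.v *)
Require Import Defs.
From HB Require Import structures.
From mathcomp Require Import all_boot all_order all_algebra all_fingroup all_solvable all_field all_character.
Set Implicit Arguments. Unset Strict Implicit. Unset Printing Implicit Defensive.
Import Order.TTheory GRing.Theory Num.Theory.
Local Open Scope ring_scope.

Lemma mc_val (gT : finGroupType) (G : {group gT}) (n : nat)
    (rG : mx_representation algC G n) i j :
  (mckay_coef rG i j)%:~R = '[cfRepr rG * 'chi_i, 'chi_j].
Proof.
rewrite /mckay_coef floorK //; apply: intr_nat.
by apply: Cnat_cfdot_char; rewrite ?irr_char // rpredM ?cfRepr_char ?irr_char.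
Qed.

Lemma col_eigen (gT : finGroupType) (G : {group gT}) (n : nat)
    (rG : mx_representation algC G n) i g :
  \sum_j (ext_mckay_cartan rG i j)%:~R * 'chi_j g
    = (n%:R - cfRepr rG g) * 'chi_i g.
Proof.
under eq_bigr => j _ do rewrite mxE rmorphB /= mc_val rmorphMn /= mulrBl.
rewrite sumrB (bigD1 i) //= eqxx big1 ?addr0; last first.
  by move=> j; rewrite eq_sym => /negbTE ->; rewrite mulr0n mul0r.
rewrite mulrBl; congr (_ - _).
have -> : \sum_j '[cfRepr rG * 'chi_i, 'chi_j] * 'chi_j g = (cfRepr rG * 'chi_i) g.
  by rewrite {2}(cfun_sum_cfdot (cfRepr rG * 'chi_i)) sum_cfunE; apply: eq_bigr => j _; rewrite cfunE.
by rewrite cfunE.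
Qed.

Lemma ext_sym (gT : finGroupType) (G : {group gT}) (n : nat)
    (rG : mx_representation algC G n)
    (real_char : forall g, cfRepr rG g \is Num.real) i j :
  ext_mckay_cartan rG i j = ext_mckay_cartan rG j i.
Proof.
rewrite !mxE eq_sym; congr (_ - _); apply: (@intr_inj algC); rewrite !mc_val.
have nat1 : '[cfRepr rG * 'chi_j, 'chi_i] \is a Num.nat.
  by apply: Cnat_cfdot_char; rewrite ?irr_char // rpredM ?cfRepr_char ?irr_char.
rewrite -(conj_natr nat1) -cfdotC !cfdotE; congr (_ * _); apply: eq_bigr => x _.
have /CrealP hr := real_char x.
move: hr; set chi := cfRepr rG => hr; clearbody chi.
rewrite !cfunE rmorphM /= hr.
by rewrite mulrA (mulrC (chi x)).
Qed.


Lemma chi0E (gT : finGroupType) (G : {group gT}) g : g \in G -> 'chi[G]_0 g = 1.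
Proof. by move=> gG; rewrite irr0 cfun1E gG. Qed.

Lemma faithful_one (gT : finGroupType) (G : {group gT}) (n : nat)
    (rG : mx_representation algC G n) (faithful : mx_faithful rG) g :
  g \in G -> cfRepr rG g = n%:R -> g = 1%g.
Proof.
move=> gG hg; have h1 : rG g = 1%:M by apply: (max_cfRepr_mx1 gG); rewrite cfRepr1 hg.
have : g \in rker rG by apply/rkerP.
by move/(subsetP faithful); rewrite inE => /eqP.
Qed.

Lemma row_eigen (gT : finGroupType) (G : {group gT}) (n : nat)
    (rG : mx_representation algC G n)
    (real_char : forall g, cfRepr rG g \is Num.real) j g :
  \sum_i 'chi_i g * (ext_mckay_cartan rG i j)%:~R
    = (n%:R - cfRepr rG g) * 'chi_j g.
Proof.
rewrite -col_eigen; apply: eq_bigr => i _; by rewrite mulrC ext_sym.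
Qed.

Lemma C_inj (gT : finGroupType) (G : {group gT}) (n : nat)
    (rG : mx_representation algC G n) (faithful : mx_faithful rG)
    (y : 'rV[algC]_(pred_Nirr G)) :
  y *m map_mx intr (mckay_cartan rG) = 0 -> y = 0.
Proof.
move=> y0.
have cfZ : forall a (phi : 'CF(G)) x, (a *: phi) x = a * phi x by move=> *; rewrite cfunE.
set psi : 'CF(G) := \sum_(i < pred_Nirr G) y 0 i *: 'chi_(lift 0 i).
set t := \sum_(i < pred_Nirr G) y 0 i * (ext_mckay_cartan rG (lift 0 i) 0)%:~R.
have key : forall g, g \in G -> (n%:R - cfRepr rG g) * psi g = t.
  move=> g gG; rewrite sum_cfunE mulr_sumr.
  transitivity (\sum_(i < pred_Nirr G) y 0 i *
     \sum_j (ext_mckay_cartan rG (lift 0 i) j)%:~R * 'chi_j g).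
    by apply: eq_bigr => i _; rewrite cfZ col_eigen mulrCA.
  under eq_bigr do rewrite mulr_sumr.
  rewrite exchange_big /= big_ord_recl /= chi0E // [X in _ + X]big1 ?addr0.
    by rewrite /t; apply: eq_bigr => i _; rewrite mulr1.
  move=> j _.
  have := congr1 (fun M : 'M[algC]_(1, pred_Nirr G) => M 0 j) y0; rewrite !mxE /= => hj.
  transitivity ((\sum_i y 0 i * (map_mx intr (mckay_cartan rG)) i j) * 'chi_(lift ord0 j) g).
    by rewrite mulr_suml; apply: eq_bigr => i _; rewrite !mxE mulrA.
  by rewrite hj mul0r.
have t0 : t = 0 by rewrite -(key 1%g) // cfRepr1 subrr mul0r.
have psi0 : forall g, g \in G -> psi g = 0.
  move=> g gG; have [->|g1] := eqVneq g 1%g.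
    have : '[psi, 'chi_0] = 0.
      rewrite cfdot_suml big1 // => i _; rewrite cfdotZl cfdot_irr.
      by rewrite eq_sym (negbTE (neq_lift _ _)) mulr0.
    rewrite cfdotE (bigD1 1%g) //= big1 ?addr0.
      rewrite chi0E // conjC1 mulr1 => /eqP; rewrite mulf_eq0 invr_eq0 pnatr_eq0.
      by rewrite eqn0Ngt cardG_gt0 /= => /eqP.
    move=> x /andP[xG x1]; suff -> : psi x = 0 by rewrite mul0r.
    have := key x xG; rewrite t0 => /eqP; rewrite mulf_eq0 => /orP[|/eqP //].
    rewrite subr_eq0 => /eqP hx; have := faithful_one faithful xG (esym hx).
    by move/eqP; rewrite (negbTE x1).
  have := key g gG; rewrite t0 => /eqP; rewrite mulf_eq0 => /orP[|/eqP //].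
  rewrite subr_eq0 => /eqP hx; have := faithful_one faithful gG (esym hx).
  by move/eqP; rewrite (negbTE g1).
apply/rowP => j; rewrite mxE.
have : '[psi, 'chi_(lift 0 j)] = y 0 j.
  rewrite cfdot_suml (bigD1 j) //= big1 ?addr0.
    by rewrite cfdotZl cfdot_irr eqxx mulr1.
  move=> i ij; rewrite cfdotZl cfdot_irr.
  suff -> : (lift 0 i == lift 0 j) = false by rewrite mulr0.
  by apply/negbTE; apply: contra ij => /eqP /lift_inj ->.
rewrite cfdotE big1 ?mulr0 // => x xG.
by rewrite psi0 // mul0r.
Qed.


Lemma E_eigen (gT : finGroupType) (G : {group gT}) (n : nat)
    (rG : mx_representation algC G n)
    (real_char : forall g, cfRepr rG g \is Num.real) (c : gT) (cG : c \in G)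
    r (gs : 'I_r -> gT) (gsG : forall s, gs s \in G)
    (gsc : forall s, cfRepr rG (gs s) = cfRepr rG c) :
  let E := \matrix_(s < r, j < pred_Nirr G)
              ('chi_(lift 0 j) (gs s) - 'chi_(lift 0 j) c) in
  E *m map_mx intr (mckay_cartan rG) = (n%:R - cfRepr rG c) *: E.
Proof.
move=> E; apply/matrixP => s j; rewrite !mxE.
have h := congr1 (fun x => x) (row_eigen real_char (lift 0 j) (gs s)).
have h2 := row_eigen real_char (lift 0 j) c.
have : \sum_i ('chi_i (gs s) - 'chi_i c) * (ext_mckay_cartan rG i (lift 0 j))%:~R
   = (n%:R - cfRepr rG c) * ('chi_(lift 0 j) (gs s) - 'chi_(lift 0 j) c).
  under eq_bigr do rewrite mulrBl.
  by rewrite sumrB h h2 gsc mulrBr.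
rewrite big_ord_recl /= !chi0E // subrr mul0r add0r => <-.
by apply: eq_bigr => i _; rewrite !mxE.
Qed.

Lemma E_free (gT : finGroupType) (G : {group gT}) (c : gT) (cG : c \in G)
    r (gs : 'I_r -> gT) (gsG : forall s, gs s \in G)
    (gsinj : forall s t, gs s \in (gs t ^: G)%g -> s = t)
    (cnot : forall t, c \notin (gs t ^: G)%g) :
  row_free (\matrix_(s < r, j < pred_Nirr G)
              ('chi[G]_(lift 0 j) (gs s) - 'chi_(lift 0 j) c)).
Proof.
apply/inj_row_free => v v0; apply/rowP => t; rewrite mxE.
have hi : forall i : Iirr G, \sum_s v 0 s * ('chi_i (gs s) - 'chi_i c) = 0.
  move=> i; case: (unliftP 0 i) => [j ->|->].
    have := congr1 (fun M : 'M[algC]_(1, pred_Nirr G) => M 0 j) v0.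
    rewrite !mxE /= => hj; rewrite -[RHS]hj; apply: eq_bigr => s _; by rewrite ?mxE.
  by rewrite big1 // => s _; rewrite !chi0E // subrr mulr0.
have : \sum_i (\sum_s v 0 s * ('chi[G]_i (gs s) - 'chi_i c)) * ('chi_i (gs t))^* = 0.
  by rewrite big1 // => i _; rewrite hi mul0r.
under eq_bigr do rewrite mulr_suml.
rewrite exchange_big /=.
under eq_bigr do (under eq_bigr do rewrite -mulrA mulrBl; rewrite -mulr_sumr sumrB).
under eq_bigr do rewrite !second_orthogonality_relation //.
rewrite (bigD1 t) //= big1 ?addr0.
  rewrite (negbTE (cnot t)) mulr0n subr0 class_refl => /eqP.
  rewrite mulf_eq0 => /orP[/eqP //|]; rewrite mulr1n pnatr_eq0 eqn0Ngt.
  by rewrite cardG_gt0.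
move=> s st; rewrite (negbTE (cnot t)) mulr0n subr0.
suff -> : (gs s \in (gs t ^: G)%g) = false by rewrite mulr0n mulr0.
by apply/negbTE; apply: contra st => /gsinj ->.
Qed.


Lemma int_main l r (C : 'M[int]_l) (k : int) (E : 'M[algC]_(r, l)) :
  row_free E -> E *m map_mx intr C = k%:~R *: E ->
  (forall y : 'rV[algC]_l, y *m map_mx intr C = 0 -> y = 0) ->
  coker_has_subgroup_Zk_pow C k r.
Proof.
move=> Efree Eeig Cinj.
have [L Lu [R Ru [d _ hM]]] := int_Smith_normal_form (C - k%:M).
set D := \matrix_(i, j) (d`_i *+ (i == j :> nat)) in hM.
pose Ei m1 m2 (A : 'M[int]_(m1, m2)) : 'M[algC]_(m1, m2) := map_mx intr A.
have EiM m1 m2 m3 (A : 'M[int]_(m1, m2)) (B : 'M[int]_(m2, m3)) :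
  Ei _ _ (A *m B) = Ei _ _ A *m Ei _ _ B by rewrite /Ei map_mxM.
have EiLV : Ei _ _ L *m Ei _ _ (invmx L) = 1%:M by rewrite -EiM mulmxV // /Ei map_mx1.
have EiRV : Ei _ _ R *m Ei _ _ (invmx R) = 1%:M by rewrite -EiM mulmxV // /Ei map_mx1.
pose Z := [set j : 'I_l | d`_j == 0].
pose F := E *m Ei _ _ L.
have F0 : F *m Ei _ _ D = 0.
  have : E *m Ei _ _ (C - k%:M) = 0.
    by rewrite /Ei map_mxB /= map_scalar_mx /= mulmxBr Eeig mul_mx_scalar subrr.
  rewrite hM !EiM !mulmxA => /(congr1 (mulmx^~ (Ei _ _ (invmx R)))).
  by rewrite -mulmxA EiRV mulmx1 mul0mx.
have Ffree : row_free F.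
  apply/inj_row_free => v vF; apply: (row_free_inj Efree); rewrite /= mul0mx.
  by rewrite -[_ *m E]mulmx1 -EiLV !mulmxA -(mulmxA v) vF !mul0mx.
clearbody F.
have Fz : forall s j, j \notin Z -> F s j = 0.
  move=> s j; rewrite inE => dj.
  have := congr1 (fun M : 'M[algC]_(r, l) => M s j) F0; rewrite !mxE /=.
  rewrite (bigD1 j) //= big1 ?addr0; last first.
    by move=> i /negbTE ij; rewrite !mxE (_ : (i == j :> nat) = false) ?mulr0n ?rmorph0 ?mulr0 //.
  rewrite !mxE eqxx mulr1n => /eqP; rewrite mulf_eq0 intr_eq0 (negbTE dj) orbF.
  by move/eqP.
have hr : (r <= #|Z|)%N.
  pose P := \matrix_(s < r, t < #|Z|) F s (enum_val t).
  have Pfree : row_free P.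
    apply/inj_row_free => v vP; apply: (row_free_inj Ffree); rewrite /= mul0mx.
    apply/rowP => j; rewrite !mxE; have [jZ|jZ] := boolP (j \in Z).
      have := congr1 (fun M : 'M[algC]_(1, #|Z|) => M 0 (enum_rank_in jZ j)) vP.
      rewrite !mxE /= => hj; rewrite -[RHS]hj; apply: eq_bigr => s _; rewrite mxE enum_rankK_in //.
    by rewrite big1 // => s _; rewrite Fz ?mulr0.
  by have := rank_leq_col P; rewrite (eqP Pfree).
pose h (s : 'I_r) : 'I_l := enum_val (widen_ord hr s).
have hZ s : h s \in Z by apply: enum_valP.
have hinj : injective h.
  by move=> s t /enum_val_inj /(congr1 val) /= /val_inj.
have scalar_mx0 : (0 : int)%:M = 0 :> 'M[int]_1.
  by apply/matrixP => i j; rewrite !mxE mul0rn.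
pose f (s : 'I_r) : 'rV[int]_l := 'e_(h s) *m invmx L.
pose p (s : 'I_r) : 'cV[int]_l := L *m delta_mx (h s) 0.
have fp s t : f s *m p t = ((s == t)%:R)%:M.
  rewrite /f /p mulmxA -(mulmxA _ (invmx L)) mulVmx // mulmx1 mul_delta_mx_cond.
  rewrite (inj_eq hinj); case: eqP => _; last by rewrite mulr0n scalar_mx0.
  by apply/matrixP => i j; rewrite !mxE !ord1.
have feig s : f s *m C = k *: f s.
  have : f s *m (C - k%:M) = 0.
    rewrite hM /f !mulmxA -(mulmxA _ (invmx L)) mulVmx // mulmx1.
    have -> : 'e_(h s) *m D = 0 :> 'rV[int]_l.
      rewrite -rowE; apply/rowP => j; rewrite !mxE.
      by move: (hZ s); rewrite inE => /eqP ->; rewrite mul0rn.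
    by rewrite mul0mx.
  by rewrite mulmxBr mul_mx_scalar => /eqP; rewrite subr_eq0 => /eqP.
exists f; split.
  by move=> i; exists (f i); rewrite feig.
move=> a [x hx] i.
set w := k *: x - \sum_s a s *: f s.
have w0 : w *m C = 0.
  rewrite /w mulmxBl -scalemxAl hx mulmx_suml scaler_sumr.
  under [X in _ - X]eq_bigr do rewrite -scalemxAl feig scalerA mulrC -scalerA.
  by rewrite subrr.
have wz : w = 0.
  have h0 : Ei _ _ w = 0.
    apply: Cinj; rewrite -EiM w0; apply/matrixP => i0 j; rewrite !mxE.
    by rewrite mulr0z.
  apply/rowP => j; have := congr1 (fun M : 'M[algC]_(1, l) => M 0 j) h0.
  by rewrite !mxE => /eqP; rewrite intr_eq0 => /eqP.
have := congr1 (fun M => (M *m p i) 0 0) wz.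
rewrite /w mulmxBl mulmx_suml mul0mx mxE.
rewrite (bigD1 i) //= big1 ?addr0; last first.
  by move=> s /negbTE si; rewrite -scalemxAl fp si scalar_mx0 scaler0.
rewrite -!scalemxAl fp eqxx !mxE /= mulr1n mulr1 => /eqP; rewrite subr_eq0 => /eqP <-.
by apply/dvdzP; exists (\sum_(j < l) x 0 j * p i j 0); rewrite mulrC.
Qed.

Unset Implicit Arguments.
Set Strict Implicit.

Theorem theorem1 (gT : finGroupType) (G : {group gT}) (n : nat)
    (rG : mx_representation algC G n)
    (faithful : mx_faithful rG)
    (real_char : forall g, cfRepr rG g \is Num.real)
    (c : gT) (cG : c \in G) (z : int) (chi_c_int : cfRepr rG c = z%:~R) :
  let m := #|[set xG in classes G | cfRepr rG (repr xG) == cfRepr rG c]| in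
  coker_has_subgroup_Zk_pow (mckay_cartan rG) (n%:Z - z) m.-1.
Proof.
move=> m; rewrite /m.
set Sset := [set xG in classes G | cfRepr rG (repr xG) == cfRepr rG c].
set S' := Sset :\ (c ^: G)%g.
have cS : (c ^: G)%g \in Sset.
  rewrite inE mem_classes //=; have [y yG ->] := repr_class G c.
  by rewrite cfunJ.
have mr : #|Sset|.-1 = #|S'| by rewrite (cardsD1 (c ^: G)%g) cS.
rewrite mr.
pose X (t : 'I_#|S'|) := @enum_val _ (pred_of_set S') t.
pose gs (t : 'I_#|S'|) := repr (X t).
have XS t : X t \in S' by apply: enum_valP.
have Xcl t : X t \in classes G.
  by have := XS t; rewrite !inE => /andP[_ /andP[-> _]].
have Xne t : X t != (c ^: G)%g.
  by have := XS t; rewrite !inE => /andP[].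
have gsG t : gs t \in G by have /repr_classesP[] := Xcl t.
have Xeq t : X t = (gs t ^: G)%g by have /repr_classesP[] := Xcl t.
have gsc t : cfRepr rG (gs t) = cfRepr rG c.
  by have := XS t; rewrite !inE => /andP[_ /andP[_ /eqP]].
have gsinj s t : gs s \in (gs t ^: G)%g -> s = t.
  move/class_eqP; rewrite -!Xeq; exact: enum_val_inj.
have cnot t : c \notin (gs t ^: G)%g.
  apply/negP => /class_eqP; rewrite -Xeq => h.
  by have := Xne t; rewrite h eqxx.
apply: (int_main (E_free cG gsG gsinj cnot)).
  rewrite (E_eigen real_char cG gsG gsc).
  by rewrite rmorphB /= chi_c_int.
exact: C_inj faithful.
Qed.
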